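(* Let $C\subseteq\Pr(\mathbb{T})$ be minimal with respect to being compact, convex, closed under $\hat{}$, and nonempty, and let $\preceq$ be a linear quasi-order on $\mathbb{T}$ such that $s\prec s\,\hat{}\,t$ and $t\prec s\,\hat{}\,t$ for all $s,t\in\mathbb{T}$. Then either (i) for every $\mu\in C$ and every incompatible pair $\sigma<_{\mathrm{lex}}\varsigma$ of finite binary sequences, $\mu$-almost every $t$ satisfies $t/\sigma\prec t/\varsigma$; or (ii) for every $\mu\in C$ and every incompatible pair $\sigma<_{\mathrm{lex}}\varsigma$ of finite binary sequences, $\mu$-almost every $t$ satisfies $t/\varsigma\prec t/\sigma$.
   Context: For $a,b\subseteq(0,1]$ put $a\,\hat{}\,b=\tfrac12 a\cup\tfrac12(b+1)$; $\mathbb{T}$ is the set generated from $\mathbf{1}=\{1\}$ by $\hat{}$ (free binary system on one generator; each $t\neq\mathbf1$ is uniquely $a\,\hat{}\,b$). $\Pr(\mathbb{T})$ is the set of finitely additive probability measures on $\mathbb{T}$, viewed as positive normalized functionals on $\ell^\infty(\mathbb{T})$ with the weak* topology; $(\mu\,\hat{}\,\nu)(f)=\int\int f(x\,\hat{}\,y)\,d\nu(y)\,d\mu(x)$, and $C$ is closed under $\hat{}$ if $\mu\,\hat{}\,\nu\in C$ for $\mu,\nu\in C$. A linear quasi-order is a reflexive transitive relation in which any two elements are comparable; $s\prec t$ means $s\preceq t$ and not $t\preceq s$. For a finite binary sequence $\sigma$, $t/\sigma$ is the subterm at address $\sigma$: $t/\emptyset=t$, $(a\,\hat{}\,b)/0\sigma=a/\sigma$,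 $(a\,\hat{}\,b)/1\sigma=b/\sigma$ (undefined otherwise). Two sequences are incompatible if neither is an initial segment of the other; $<_{\mathrm{lex}}$ is lexicographic order. ''$\mu$-almost every $t$ satisfies $P$'' means the set of $t$ for which the relevant subterms are defined and $P$ holds has $\mu$-measure $1$. *)

(* Defs.v *)
From HB Require Import structures.
From mathcomp Require Import all_boot all_order all_algebra.
From mathcomp Require Import all_classical all_reals all_analysis.
From mathcomp Require Import Rstruct Rstruct_topology.
Set Implicit Arguments. Unset Strict Implicit. Unset Printing Implicit Defensive.
Import Order.TTheory GRing.Theory Num.Theory.
Local Open Scope classical_set_scope.
Local Open Scope ring_scope.

(* The free binary system T on one generator 1: binary trees,
   [leaf] = 1, [node a b] = a ^ b. *)
Inductive tree : Type := leaf | node of tree & tree.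

Notation realR := Rdefinitions.R.

Definition bounded_fun (f : tree -> realR) : Prop :=
  exists M : realR, forall x, `|f x| <= M.

(* A finitely additive probability measure on T, viewed as a positive
   normalized linear functional on l^oo(T).  It is encoded as a function on
   all of (tree -> R), normalized to be 0 outside l^oo(T), so that the
   encoding is injective and the topology of pointwise convergence on
   (tree -> R) -> R restricts to the weak* topology. *)
Definition is_mean (phi : (tree -> realR) -> realR) : Prop :=
  [/\ (forall f g, bounded_fun f -> bounded_fun g ->
         phi (fun x => f x + g x) = phi f + phi g),
      (forall (c : realR) f, bounded_fun f -> phi (fun x => c * f x) = c * phi f),
      (forall f, bounded_fun f -> (forall x, 0 <= f x) -> 0 <= phi f),
      phi (fun _ => 1) = 1
    & (forall f, ~ bounded_fun f -> phi f = 0)].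

Definition PrT : set ((tree -> realR) -> realR) := [set phi | is_mean phi].

Definition conv (mu nu : (tree -> realR) -> realR) : (tree -> realR) -> realR :=
  fun f => if `[< bounded_fun f >]
           then mu (fun x => nu (fun y => f (node x y))) else 0.

Definition closed_under_conv (C : set ((tree -> realR) -> realR)) : Prop :=
  forall mu nu, C mu -> C nu -> C (conv mu nu).

Definition convex_set (C : set ((tree -> realR) -> realR)) : Prop :=
  forall mu nu (t : realR), C mu -> C nu -> 0 <= t <= 1 ->
    C (fun f => t * mu f + (1 - t) * nu f).

Definition weak_star_compact (C : set ((tree -> realR) -> realR)) : Prop :=
  compact (C : set {ptws (tree -> realR) -> realR}).

Definition good_set (C : set ((tree -> realR) -> realR)) : Prop :=
  [/\ C `<=` PrT, weak_star_compact C, convex_set C, closed_under_conv C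
    & C !=set0].

Definition minimal_good (C : set ((tree -> realR) -> realR)) : Prop :=
  good_set C /\ forall D, D `<=` C -> good_set D -> D = C.

Definition meas (mu : (tree -> realR) -> realR) (A : set tree) : realR :=
  mu (\1_A).

Definition ae (mu : (tree -> realR) -> realR) (P : tree -> Prop) : Prop :=
  meas mu [set t | P t] = 1.

Definition linear_quasi_order (le : tree -> tree -> Prop) : Prop :=
  [/\ (forall s, le s s),
      (forall s t u, le s t -> le t u -> le s u)
    & (forall s t, le s t \/ le t s)].

Definition strict (le : tree -> tree -> Prop) (s t : tree) : Prop :=
  le s t /\ ~ le t s.

(* t / sigma; false = 0 (left), true = 1 (right) *)
Fixpoint subterm (t : tree) (s : seq bool) : option tree :=
  match s with
  | [::] => Some t
  | b :: s' => match t with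
               | leaf => None
               | node a c => subterm (if b then c else a) s'
               end
  end.

Definition incompatible (s1 s2 : seq bool) : Prop :=
  ~~ prefix s1 s2 /\ ~~ prefix s2 s1.

Fixpoint lexlt (s1 s2 : seq bool) : bool :=
  match s1, s2 with
  | [::], [::] => false
  | [::], _ :: _ => true
  | _ :: _, [::] => false
  | a :: s1', b :: s2' => (~~ a && b) || ((a == b) && lexlt s1' s2')
  end.

Definition ae_sub_lt (le : tree -> tree -> Prop) mu (s1 s2 : seq bool) : Prop :=
  ae mu (fun t => exists a b, subterm t s1 = Some a /\ subterm t s2 = Some b /\
                              strict le a b).

(* Main.v *)
Require Import Defs.
From HB Require Import structures.
From mathcomp Require Import all_boot all_order all_algebra.
From mathcomp Require Import all_classical all_reals all_analysis.
From mathcomp Require Import Rstruct Rstruct_topology.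
From mathcomp Require Import lra.
Set Implicit Arguments. Unset Strict Implicit. Unset Printing Implicit Defensive.
Import Order.TTheory GRing.Theory Num.Theory.
Local Open Scope classical_set_scope.
Local Open Scope ring_scope.

Lemma closed_evle (f : tree -> realR) (c : realR) :
  closed ([set nu | nu f <= c] : set {ptws (tree -> realR) -> realR}).
Proof.
have H0 : continuous (fun nu : {ptws (tree -> realR) -> realR} => nu f).
  exact: (@proj_continuous _ (fun _ : tree -> realR => realR) f).
have H := proj1 (continuous_closedP _) H0.
exact: (H _ (@closed_le _ c)).
Qed.
Lemma closed_evge (f : tree -> realR) (c : realR) :
  closed ([set nu | c <= nu f] : set {ptws (tree -> realR) -> realR}).
Proof.
have H0 : continuous (fun nu : {ptws (tree -> realR) -> realR} => nu f).
  exact: (@proj_continuous _ (fun _ : tree -> realR => realR) f).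
have H := proj1 (continuous_closedP _) H0.
exact: (H _ (@closed_ge _ c)).
Qed.

Definition unitfn (f : tree -> realR) := forall x, 0 <= f x <= 1.

Lemma unitfn_bnd f : unitfn f -> Defs.bounded_fun f.
Proof. by move=> h; exists 1 => x; have /andP[h0 h1] := h x; rewrite ger0_norm. Qed.

Lemma indic_unit (A : set tree) : unitfn (\1_A).
Proof. move=> x; rewrite indicE; case: (x \in A) => /=; by rewrite ?lexx ?ler01. Qed.

Lemma ind1 (A : set tree) x : A x -> \1_A x = 1 :> realR.
Proof. by move=> h; rewrite indicE mem_set. Qed.
Lemma ind0 (A : set tree) x : ~ A x -> \1_A x = 0 :> realR.
Proof. by move=> h; rewrite indicE memNset. Qed.

Lemma ind_imp (A B : set tree) x y : (A x -> B y) -> \1_A x <= \1_B y :> realR.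
Proof.
move=> h; case: (pselect (A x)) => hA.
  by rewrite ind1 // ind1 //; exact: h.
by rewrite (ind0 hA); have /andP[] := indic_unit B y.
Qed.

Lemma ind_imp2 (A B B' : set tree) x y z : (A z -> B x /\ B' y) ->
  \1_A z <= \1_B x * \1_B' y :> realR.
Proof.
move=> h; case: (pselect (A z)) => hA.
  by have [??] := h hA; rewrite ind1 // ind1 // ind1 // mulr1.
rewrite (ind0 hA); have /andP[? _] := indic_unit B x.
have /andP[? _] := indic_unit B' y; exact: mulr_ge0.
Qed.

Section M.
Variable phi : (tree -> realR) -> realR.
Hypothesis hphi : is_mean phi.

Lemma mean_cst c : phi (fun _ => c) = c.
Proof.
case: hphi => _ hZ _ h1 _.
have -> : (fun _ : tree => c) = (fun _ => c * 1) by apply: funext => x; rewrite mulr1.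
by rewrite hZ ?h1 ?mulr1 //; exists 1 => x; rewrite normr1.
Qed.

Lemma bnd_add f g : Defs.bounded_fun f -> Defs.bounded_fun g -> Defs.bounded_fun (fun x => f x + g x).
Proof.
move=> [M hM] [N hN]; exists (M + N) => x.
by apply: le_trans (ler_normD _ _) _; apply: lerD.
Qed.
Lemma bnd_scale c f : Defs.bounded_fun f -> Defs.bounded_fun (fun x => c * f x).
Proof.
move=> [M hM]; exists (`|c| * M) => x.
by rewrite normrM; apply: ler_wpM2l.
Qed.

Lemma mean_le f g : Defs.bounded_fun f -> Defs.bounded_fun g -> (forall x, f x <= g x) ->
  phi f <= phi g.
Proof.
move=> bf bg h; case: hphi => hA hZ hP _ _.
have bm : Defs.bounded_fun (fun x => -1 * f x) by exact: bnd_scale.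
have bd : Defs.bounded_fun (fun x => g x + -1 * f x) by exact: bnd_add.
have e : g = (fun x => f x + (g x + -1 * f x)).
  by apply: funext => x; rewrite mulN1r addrC subrK.
rewrite [in X in _ <= X]e hA // lerDl; apply: hP => // x.
by rewrite mulN1r subr_ge0.
Qed.

Lemma mean_lin f a b : Defs.bounded_fun f -> phi (fun x => a + b * f x) = a + b * phi f.
Proof.
move=> bf; case: hphi => hA hZ _ _ _.
rewrite hA ?mean_cst ?hZ //; last exact: bnd_scale.
by exists `|a| => x.
Qed.

Lemma mean_unit f : unitfn f -> 0 <= phi f <= 1.
Proof.
move=> h; have bf := unitfn_bnd h.
have b0 : Defs.bounded_fun (fun _ : tree => (0:realR)) by exists 0 => x; rewrite normr0.
have b1 : Defs.bounded_fun (fun _ : tree => (1:realR)) by exists 1 => x; rewrite normr1.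
apply/andP; split.
  by rewrite -(mean_cst 0); apply: mean_le => // x; case/andP: (h x).
by rewrite -[X in _ <= X](mean_cst 1); apply: mean_le => // x; case/andP: (h x).
Qed.

Lemma meas_unit A : 0 <= meas phi A <= 1.
Proof. exact/mean_unit/indic_unit. Qed.

Lemma mean_unit_lift (f : tree -> tree -> realR) : (forall x, unitfn (f x)) ->
  unitfn (fun x => phi (f x)).
Proof. by move=> h x; apply: mean_unit. Qed.
End M.


Lemma conv_ind mu nu (A : set tree) :
  meas (Defs.conv mu nu) A = mu (fun x => nu (fun y => \1_A (node x y))).
Proof.
rewrite /meas /Defs.conv asboolT //; exact/unitfn_bnd/indic_unit.
Qed.

Lemma good_mean C mu : minimal_good C -> C mu -> is_mean mu.
Proof. by case=> -[h _ _ _ _] _ /h. Qed.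

Lemma key (C : set ((tree -> realR) -> realR)) (P : set ((tree -> realR) -> realR)) :
  minimal_good C ->
  closed (P : set {ptws (tree -> realR) -> realR}) ->
  (forall mu nu (t : realR), C mu -> C nu -> P mu -> P nu -> 0 <= t <= 1 ->
     P (fun f => t * mu f + (1 - t) * nu f)) ->
  (exists mu, C mu /\ P mu) ->
  (forall mu nu, C mu -> C nu -> P mu -> P nu -> P (Defs.conv mu nu)) ->
  forall mu, C mu -> P mu.
Proof.
move=> hm cP cvP [m0 [Cm0 Pm0]] cnP.
have [[hPr hcp hcv hcc hne] hmin] := hm.
have e := hmin (C `&` P) (@subIsetl _ C P).
suff gD : good_set (C `&` P).
  by move=> mu Cmu; rewrite -(e gD) in Cmu; case: Cmu.
split.
- by move=> mu [/hPr].
- exact: compact_closedI.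
- by move=> mu nu t [Cm Pm] [Cn Pn] ht; split; [exact: hcv | exact: cvP].
- by move=> mu nu [Cm Pm] [Cn Pn]; split; [exact: hcc | exact: cnP].
- by exists m0.
Qed.

Lemma keyOne C (A : set tree) : minimal_good C ->
  (forall mu nu, C mu -> C nu -> meas (Defs.conv mu nu) A = 1) ->
  forall mu, C mu -> meas mu A = 1.
Proof.
move=> hm h mu Cmu.
have [[_ _ _ hcc [m0 Cm0]] _] := hm.
have h1 : [set nu | 1 <= nu (\1_A)] mu.
  apply: (key hm (@closed_evge (\1_A) 1) _ _ _ Cmu).
  - move=> m n t _ _ /= h1 h2 /andP[t0 t1]; nra.
  - by exists (Defs.conv m0 m0); split; [exact: hcc | rewrite /= -/(meas _ A) h].
  - by move=> m n Cm Cn _ _; rewrite /= -/(meas _ A) h.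
 apply/eqP; rewrite eq_le h1 andbT.
  by case/andP: (meas_unit (good_mean hm Cmu) A).
Qed.

Lemma keyLe C (A : set tree) (c : realR) : minimal_good C ->
  (exists mu, C mu /\ meas mu A <= c) ->
  (forall mu nu, C mu -> C nu -> meas mu A <= c -> meas nu A <= c ->
     meas (Defs.conv mu nu) A <= c) ->
  forall mu, C mu -> meas mu A <= c.
Proof.
move=> hm [m0 [Cm0 h0]] h mu Cmu.
have h1 : [set nu | nu (\1_A) <= c] mu.
  apply: (key hm (@closed_evle (\1_A) c) _ _ _ Cmu).
  - move=> m n t _ _ /= h1 h2 /andP[t0 t1]; nra.
  - by exists m0.
  - exact: h.
exact: h1.
Qed.

Lemma bnd_indic_mul (A : set tree) (m : realR) :
  Defs.bounded_fun (fun x => m * \1_A x).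
Proof. apply: bnd_scale; exact/unitfn_bnd/indic_unit. Qed.

Lemma prod_bound mu nu (A : set tree) : is_mean mu -> is_mean nu ->
  (forall x y, A (node x y) -> A x /\ A y) ->
  meas (Defs.conv mu nu) A <= meas mu A * meas nu A.
Proof.
move=> hmu hnu hA; rewrite conv_ind.
have [_ hZn _ _ _] := hnu; have [_ hZm _ _ _] := hmu.
apply: (@le_trans _ _ (mu (fun x => meas nu A * \1_A x))).
  apply: mean_le => //.
  - apply/unitfn_bnd/mean_unit_lift => // x y; exact: indic_unit.
  - exact: bnd_indic_mul.
  move=> x; rewrite mulrC /meas -hZn; last exact/unitfn_bnd/indic_unit.
  apply: mean_le => //.
  - exact/unitfn_bnd/indic_unit.
  - exact: bnd_indic_mul.
  move=> y; apply: (@ind_imp2 A A A x y (node x y)); exact: hA.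
rewrite hZm; first by rewrite mulrC.
exact/unitfn_bnd/indic_unit.
Qed.

Lemma zlemma C (A : set tree) : minimal_good C ->
  (forall x y, A (node x y) -> A x /\ A y) ->
  (forall mu, C mu -> meas mu A = 0) \/ (forall mu, C mu -> meas mu A = 1).
Proof.
move=> hm hA.
have [[_ _ _ hcc _] _] := hm.
case: (pselect (forall mu, C mu -> 1 <= meas mu A)) => h.
  right => mu Cmu; apply/eqP; rewrite eq_le h // andbT.
  by case/andP: (meas_unit (good_mean hm Cmu) A).
have [m0 Cm0 lt0] : exists2 m0, C m0 & meas m0 A < 1.
  apply: contra_notP h => hn mu Cmu; rewrite leNgt; apply/negP => hlt.
  by apply: hn; exists mu.
set g := meas (Defs.conv m0 m0) A.
have Cg : C (Defs.conv m0 m0) by exact: hcc.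
have mm0 := good_mean hm Cm0.
have /andP[g0 g1] : 0 <= g <= 1 := meas_unit (good_mean hm Cg) A.
have gle : g <= meas m0 A * meas m0 A := prod_bound mm0 mm0 hA.
have hall : forall mu, C mu -> meas mu A <= g.
  apply: (keyLe hm); first by exists (Defs.conv m0 m0); split.
  move=> m n Cm Cn hm1 hn1; apply: le_trans (prod_bound (good_mean hm Cm) (good_mean hm Cn) hA) _.
  have /andP[? _] := meas_unit (good_mean hm Cm) A.
  have /andP[? _] := meas_unit (good_mean hm Cn) A.
  nra.
have b0 := hall _ Cm0.
have /andP[b00 _] := meas_unit mm0 A.
have e0 : meas m0 A = 0 by nra.
left => mu Cmu; apply/eqP; rewrite eq_le.
have /andP[-> _] := meas_unit (good_mean hm Cmu) A.
rewrite andbT; apply: le_trans (hall _ Cmu) _; rewrite e0 mulr0 in gle; exact: gle.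
Qed.

Lemma ind_iff (A B : set tree) x y : (A x <-> B y) -> \1_A x = \1_B y :> realR.
Proof. by move=> [h1 h2]; apply/eqP; rewrite eq_le !ind_imp. Qed.

Lemma step C (F F' : set tree) (b : bool) : minimal_good C ->
  (forall x y, F (node x y) <-> F' (if b then y else x)) ->
  (forall mu, C mu -> meas mu F' = 1) ->
  forall mu, C mu -> meas mu F = 1.
Proof.
move=> hm hF h1; apply: (keyOne hm) => mu nu Cmu Cnu.
have mmu := good_mean hm Cmu; have mnu := good_mean hm Cnu.
rewrite conv_ind; case: b hF => hF.
  have -> : (fun x => nu (fun y => \1_F (node x y))) = (fun _ => 1).
    apply: funext => x; rewrite -(h1 _ Cnu) /meas; congr nu; apply: funext => y.
    exact: ind_iff.
  exact: mean_cst.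
have -> : (fun x => nu (fun y => \1_F (node x y))) = \1_F'.
  apply: funext => x; rewrite -(mean_cst mnu (\1_F' x)); congr nu; apply: funext => y.
  exact: ind_iff.
exact: h1.
Qed.

Lemma subterm_nil t : subterm t [::] = Some t.
Proof. by case: t. Qed.

Definition liftP (Q : set tree) (r : seq bool) : set tree :=
  [set t | exists a, subterm t r = Some a /\ Q a].

Lemma lift C (Q : set tree) : minimal_good C ->
  (forall mu, C mu -> meas mu Q = 1) ->
  forall r mu, C mu -> meas mu (liftP Q r) = 1.
Proof.
move=> hm hQ r; elim: r => [|b r IH].
  have -> : liftP Q [::] = Q.
    by apply/seteqP; split => t /=; [by move=> [a []]; rewrite subterm_nil => -[->] | by move=> qt; exists t; rewrite subterm_nil].
  exact: hQ.
by apply: (step (F' := liftP Q r) (b := b) hm).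
Qed.

Lemma inner_unit nu (A : set tree) : is_mean nu ->
  unitfn (fun x => nu (fun y => \1_A (node x y))).
Proof. by move=> h; apply: mean_unit_lift => // x y; exact: indic_unit. Qed.

Lemma inner_unit1 nu (A : set tree) x : is_mean nu ->
  0 <= nu (fun y => \1_A (node x y)) <= 1.
Proof. by move=> h; exact: (inner_unit A h). Qed.

Definition mainP (R : tree -> tree -> Prop) (s1 s2 : seq bool) : set tree :=
  [set t | exists a b, subterm t s1 = Some a /\ subterm t s2 = Some b /\ R a b].

Lemma main C (R : tree -> tree -> Prop) (G : set tree) : minimal_good C ->
  (forall mu, C mu -> meas mu G = 1) ->
  (forall a, G a -> forall mu, C mu -> meas mu [set b | R a b] = 1) ->
  forall s1 s2, incompatible s1 s2 -> lexlt s1 s2 ->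
  forall mu, C mu -> meas mu (mainP R s1 s2) = 1.
Proof.
move=> hm hG hR s1; elim: s1 => [|a s1 IH] [|b s2] //.
  by case.
move=> [/= h1 h2] /= hlt.
case: a b h1 h2 hlt => [] [] //= h1 h2 hlt.
- apply: (step (F' := mainP R s1 s2) (b := true) hm) => //.
  exact: IH.
- have E := lift hm hG s1.
  apply: (keyOne hm) => mu nu Cmu Cnu.
  have mmu := good_mean hm Cmu; have mnu := good_mean hm Cnu.
  rewrite conv_ind; apply/eqP; rewrite eq_le.
  have /andP[_ ->] := mean_unit mmu (inner_unit (mainP R (false :: s1) (true :: s2)) mnu).
  rewrite -(E _ Cmu) /=; apply: mean_le => //.
  - exact/unitfn_bnd/indic_unit.
  - exact/unitfn_bnd/inner_unit.
  move=> x; case: (pselect (liftP G s1 x)) => hx; last first.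
    rewrite (ind0 hx).
    by have /andP[] := inner_unit1 (mainP R (false :: s1) (true :: s2)) x mnu.
  rewrite (ind1 hx); case: hx => a0 [ea ga].
  rewrite -(lift hm (hR a0 ga) s2 Cnu); apply: mean_le => //.
  - exact/unitfn_bnd/indic_unit.
  - exact/unitfn_bnd/indic_unit.
  move=> y; apply: ind_imp => -[b0 [eb rb]].
  by exists a0, b0.
- apply: (step (F' := mainP R s1 s2) (b := false) hm) => //.
  exact: IH.
Qed.

Lemma meas_mono nu (A B : set tree) : is_mean nu -> (forall t, A t -> B t) ->
  meas nu A <= meas nu B.
Proof.
move=> h hAB; apply: mean_le => //; try exact/unitfn_bnd/indic_unit.
by move=> x; apply: ind_imp; exact: hAB.
Qed.

Lemma meas_one_of_zero nu (A B : set tree) : is_mean nu -> meas nu A = 0 ->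
  (forall t, ~ A t -> B t) -> meas nu B = 1.
Proof.
move=> h h0 hAB; apply/eqP; rewrite eq_le.
have /andP[_ ->] := meas_unit h B.
have e : nu (fun x => 1 + -1 * \1_A x) = 1.
  by rewrite mean_lin //; [rewrite -/(meas nu A) h0 mulr0 addr0 | exact/unitfn_bnd/indic_unit].
rewrite -e; apply: mean_le => //.
- by apply: bnd_add; [exists 1 => x; rewrite normr1 | exact: bnd_indic_mul].
- exact/unitfn_bnd/indic_unit.
move=> x; case: (pselect (A x)) => hx.
  by rewrite (ind1 hx) mulr1 subrr; have /andP[] := indic_unit B x.
by rewrite (ind0 hx) (ind1 (hAB _ hx)) mulr0 addr0.
Qed.

Theorem proposition5p4 (C : set ((tree -> realR) -> realR))
    (le : tree -> tree -> Prop) :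
  minimal_good C ->
  linear_quasi_order le ->
  (forall s t, strict le s (node s t) /\ strict le t (node s t)) ->
  (forall mu, C mu -> forall s1 s2 : seq bool,
      incompatible s1 s2 -> lexlt s1 s2 -> ae_sub_lt le mu s1 s2)
  \/
  (forall mu, C mu -> forall s1 s2 : seq bool,
      incompatible s1 s2 -> lexlt s1 s2 ->
      ae mu (fun t => exists a b, subterm t s1 = Some a /\ subterm t s2 = Some b /\
                                  strict le b a)).
Proof.
move=> hm [lrefl ltrans ltot] hst.
have [[_ _ _ hcc [m0 Cm0]] _] := hm.
have leL : forall x y a, le (node x y) a -> le x a /\ le y a.
  move=> x y a h; have [[h1 _] [h2 _]] := hst x y.
  by split; apply: ltrans h.
have ltL : forall x y a, strict le (node x y) a -> strict le x a /\ strict le y a.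
  move=> x y a [h hn]; have [[h1 n1] [h2 n2]] := hst x y.
  split; split; try by apply: ltrans h.
    by move=> hax; apply: n1; apply: ltrans hax.
  by move=> hay; apply: n2; apply: ltrans hay.
set D0 := [set x | forall nu, C nu -> meas nu [set y | le y x] = 0].
have D0cl : forall x y, D0 (node x y) -> D0 x /\ D0 y.
  move=> x y hxy; have [[h1 _] [h2 _]] := hst x y.
  have aux : forall z, le z (node x y) -> D0 z.
    move=> z hz nu Cnu; apply/eqP; rewrite eq_le.
    have /andP[h0 _] := meas_unit (good_mean hm Cnu) [set y0 | le y0 z].
    rewrite h0 andbT -(hxy _ Cnu); apply: meas_mono (good_mean hm Cnu) _ => t ht.
    exact: ltrans ht hz.
  by split; apply: aux.
case: (zlemma hm D0cl) => hD.
- right => mu Cmu s1 s2 hi hl.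
  have hG : forall nu, C nu -> meas nu (~` D0) = 1.
    move=> nu Cnu; apply: (meas_one_of_zero (good_mean hm Cnu) (hD _ Cnu)).
    by move=> t ht.
  apply: (@main C (fun a b => strict le b a) (~` D0) hm hG _ _ _ hi hl _ Cmu).
  move=> a ha nu Cnu.
  have [h0|h1] := zlemma hm (fun x y (h : [set y | le y a] (node x y)) => leL x y a h).
    by exfalso; apply: ha => nu' Cnu'; exact: h0.
  have [g0|g1] := zlemma hm (fun x y (h : [set y | strict le y a] (node x y)) => ltL x y a h); last first.
    exact: g1.
  exfalso.
  have Cc : C (Defs.conv m0 m0) by exact: hcc.
  have mm0 := good_mean hm Cm0.
  have := h1 _ Cc; rewrite conv_ind => e.
  have : m0 (fun x => m0 (fun y => \1_[set y | le y a] (node x y))) <= 0.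
    rewrite -(mean_cst mm0 0); apply: mean_le => //.
    - exact/unitfn_bnd/inner_unit.
    - by exists 0 => x; rewrite normr0.
    move=> x; rewrite -(g0 _ Cm0); apply: mean_le => //; try exact/unitfn_bnd/indic_unit.
    move=> y; apply: ind_imp => hy /=; have [[_ _] [_ n2]] := hst x y.
    split; first exact: ltrans (hst x y).2.1 hy.
    by move=> hay; apply: n2; apply: ltrans hy hay.
  by rewrite e ler10.
- left => mu Cmu s1 s2 hi hl.
  apply: (@main C (strict le) D0 hm hD _ _ _ hi hl _ Cmu).
  move=> a ha nu Cnu.
  apply: (meas_one_of_zero (good_mean hm Cnu) (ha _ Cnu)) => t ht; split => //.
  by case: (ltot a t) => // /ht.
Qed.
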